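(* Let $\ell>0$ and let $M=\mathbb R\times\{x\in\mathbb R^2: (x^1)^2+(x^2)^2<\ell^2\}$ with coordinates $(t,x^1,x^2)$. Let $\lambda(x)=\log\frac{2}{1-|x|^2/\ell^2}$, $\kappa=-\lambda$, and let $\phi(t,x)$ be an arbitrary smooth function. Take the Newton-Cartan background $$\tau_\mu dx^\mu=e^{\kappa}dt,\qquad e_\mu{}^adx^\mu=e^{\lambda}dx^a,\qquad m_\mu dx^\mu=\phi\, e^{\kappa}dt,$$ and background fields $u=0$, $v=0$, and $v_\mu$ determined by $v_0=0$, $(v^1,v^2)=\tfrac32\big(x^2/\ell^2,\,-x^1/\ell^2\big)$. Then the system (S$_-$) of Theorem 1 has two linearly independent nowhere-vanishing solutions, namely $\zeta_-=\exp(\tfrac{\pi}{8}\gamma_0)\zeta_0$ for any constant Majorana spinor $\zeta_0\neq 0$.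
   Context: Conventions: $\tau^\mu,e^\mu{}_a$ are the projective inverses ($\tau^\mu\tau_\mu=1$, $\tau^\mu e_\mu{}^a=0$, $e^\mu{}_a\tau_\mu=0$, $e^\mu{}_ae_\mu{}^b=\delta^b_a$); $v_0=\tau^\mu v_\mu$, $v_a=e^\mu{}_av_\mu$, $v^a=v_a$, so $v_\mu=\tau_\mu v_0+e_\mu{}^av_a$. $\epsilon_{12}=\epsilon^{12}=1$. $\tau_{\mu\nu}=2\partial_{[\mu}\tau_{\nu]}$, $\tau_{ab}=e^\mu{}_ae^\nu{}_b\tau_{\mu\nu}$, $\tau_{0\mu}=\tau^\nu\tau_{\nu\mu}$, $\tau_\mu{}^a=\tau_{\mu\nu}e^{\nu a}$, $\tau_\mu{}^0=\tau_{0\mu}$. Spin connection $\omega_\mu{}^{ab} = 2e^{\nu[a}\partial_{[\mu}e_{\nu]}{}^{b]} - e_\mu{}^ce^{\nu a}e^{\rho b}\partial_{[\nu}e_{\rho]c} - \tau_\mu e^{\nu a}e^{\rho b}\partial_{[\nu}m_{\rho]}$. Gamma matrices: $2\times2$, $\gamma_0^2=-\mathbb1$, $\{\gamma_a,\gamma_b\}=2\delta_{ab}$, $\{\gamma_0,\gamma_a\}=0$, $\gamma^a=\gamma_a$, $\gamma^0=-\gamma_0$, $\gamma_{ab}=\epsilon_{ab}\gamma_0$, $\gamma_{a0}=\epsilon_{ab}\gamma_b$; Majorana condition $\zeta^*=\mathrm i\mathcal C_3\gamma^0\zeta$ with $\mathcal C_3^T=-\mathcal C_3$, $\gamma^T=-\mathcal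 C_3\gamma\mathcal C_3^{-1}$. $D_\mu\zeta=\partial_\mu\zeta+\tfrac14\omega_\mu{}^{ab}\gamma_{ab}\zeta$. System (S$_-$) for a commuting Majorana spinor $\zeta_-$: $(\tfrac43 v-\epsilon^{ab}\tau_{ab})\gamma_0\zeta_-=0$; $(\tfrac32\tau_\mu{}^a\gamma_{a0}+e_\mu{}^av\gamma_a+\tau_\mu v^a\gamma_a+\mathrm{Re}(u)\tau_\mu\gamma_0+\mathrm{Im}(u)\tau_\mu)\zeta_-=0$; $D_\mu\zeta_-=(\tfrac14\tau_\mu{}^0+\tfrac12v_\mu\gamma_0-\tfrac16e_\mu{}^av_b\gamma_a\gamma^b\gamma_0-\tfrac16\mathrm{Re}(u)e_\mu{}^a\gamma_a+\tfrac16\mathrm{Im}(u)e_\mu{}^a\gamma_{a0})\zeta_-$. *)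

(* Defs.v *)
From Stdlib Require Import Reals List.
From Coquelicot Require Import Coquelicot.
Open Scope R_scope.

(** Points of R^3 with coordinates (t, x^1, x^2), indexed mu = 0,1,2. *)
Definition pt := (R * R * R)%type.
Definition coord (mu : nat) (p : pt) : R :=
  match mu with 0 => fst (fst p) | 1 => snd (fst p) | _ => snd p end.
Definition shift (mu : nat) (h : R) (p : pt) : pt :=
  match mu with
  | 0 => (fst (fst p) + h, snd (fst p), snd p)
  | 1 => (fst (fst p), snd (fst p) + h, snd p)
  | 2 => (fst (fst p), snd (fst p), snd p + h)
  | _ => p end.
Definition pder (mu : nat) (f : pt -> R) (p : pt) : R :=
  Derive (fun h => f (shift mu h p)) 0.
Definition ex_pder (mu : nat) (f : pt -> R) (p : pt) : Prop :=
  ex_derive (fun h => f (shift mu h p)) 0.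

Fixpoint iter_pder (l : list nat) (f : pt -> R) : pt -> R :=
  match l with nil => f | mu :: l' => pder mu (iter_pder l' f) end.

Definition smooth_on (U : pt -> Prop) (f : pt -> R) : Prop :=
  forall (l : list nat) (p : pt), U p ->
    continuous (iter_pder l f) p /\
    forall mu, (mu < 3)%nat -> ex_pder mu (iter_pder l f) p.

Definition sum3 (f : nat -> R) : R := f 0%nat + f 1%nat + f 2%nat.
Definition sum2 (f : nat -> R) : R := f 1%nat + f 2%nat.
Definition kron (i j : nat) : R := if Nat.eqb i j then 1 else 0.
Definition eps (a b : nat) : R :=
  match a, b with 1%nat, 2%nat => 1 | 2%nat, 1%nat => -1 | _, _ => 0 end.

Record mat2 := M2 { m11 : R; m12 : R; m21 : R; m22 : R }.
Definition spinor := (R * R)%type.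
Definition mmul (A B : mat2) : mat2 :=
  M2 (m11 A * m11 B + m12 A * m21 B) (m11 A * m12 B + m12 A * m22 B)
     (m21 A * m11 B + m22 A * m21 B) (m21 A * m12 B + m22 A * m22 B).
Definition madd (A B : mat2) : mat2 :=
  M2 (m11 A + m11 B) (m12 A + m12 B) (m21 A + m21 B) (m22 A + m22 B).
Definition mscal (c : R) (A : mat2) : mat2 :=
  M2 (c * m11 A) (c * m12 A) (c * m21 A) (c * m22 A).
Definition mzero : mat2 := M2 0 0 0 0.
Definition mid : mat2 := M2 1 0 0 1.
Definition msum3 (f : nat -> mat2) : mat2 := madd (madd (f 0%nat) (f 1%nat)) (f 2%nat).
Definition msum2 (f : nat -> mat2) : mat2 := madd (f 1%nat) (f 2%nat).
Definition mapp (A : mat2) (z : spinor) : spinor :=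
  (m11 A * fst z + m12 A * snd z, m21 A * fst z + m22 A * snd z).

(** Gamma matrices: a real representation with gamma_1 = sigma_3,
    gamma_2 = sigma_1, gamma_0 = gamma_1 gamma_2, so that gamma_0^2 = -1,
    {gamma_a,gamma_b} = 2 delta_ab, {gamma_0,gamma_a} = 0 and
    gamma_12 = gamma_0 (i.e. gamma_ab = eps_ab gamma_0). *)
Definition gam (a : nat) : mat2 :=
  match a with
  | 1%nat => M2 1 0 0 (-1)
  | 2%nat => M2 0 1 1 0
  | _ => M2 0 1 (-1) 0 end.
Definition gam0 : mat2 := gam 0.
Definition gamUp (a : nat) : mat2 :=
  match a with 0%nat => mscal (-1) gam0 | _ => gam a end.
Definition gam2 (A B : nat) : mat2 :=
  mscal (1/2) (madd (mmul (gam A) (gam B)) (mscal (-1) (mmul (gam B) (gam A)))).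

(** Majorana condition: with C_3 = -i (0 1; -1 0) (antisymmetric, and
    gamma^T = - C_3 gamma C_3^{-1} for all gamma above) the condition
    zeta^* = i C_3 gamma^0 zeta reads zeta^* = zeta, i.e. Majorana spinors
    are exactly the real two-component spinors: type spinor = R*R. *)

Section NC.
(** Newton-Cartan data: tau_mu, e_mu^a, m_mu, and projective inverses
    tau^mu (tauI), e^mu_a (eI); background fields v, u (via Re/Im),
    v_mu given by components v_0 (v0) and v_a (va). *)
Variables (tau : nat -> pt -> R) (e : nat -> nat -> pt -> R) (m : nat -> pt -> R)
  (tauI : nat -> pt -> R) (eI : nat -> nat -> pt -> R)
  (v : pt -> R) (reU imU : pt -> R) (v0 : pt -> R) (va : nat -> pt -> R).

Definition is_proj_inverse (p : pt) : Prop :=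
  sum3 (fun mu => tauI mu p * tau mu p) = 1 /\
  (forall a, (1 <= a <= 2)%nat -> sum3 (fun mu => tauI mu p * e mu a p) = 0) /\
  (forall a, (1 <= a <= 2)%nat -> sum3 (fun mu => eI mu a p * tau mu p) = 0) /\
  (forall a b, (1 <= a <= 2)%nat -> (1 <= b <= 2)%nat ->
     sum3 (fun mu => eI mu a p * e mu b p) = kron a b).

Definition vmu (mu : nat) (p : pt) : R :=
  tau mu p * v0 p + sum2 (fun a => e mu a p * va a p).

Definition tau2 (mu nu : nat) (p : pt) : R :=
  pder mu (tau nu) p - pder nu (tau mu) p.
Definition tau_ab (a b : nat) (p : pt) : R :=
  sum3 (fun mu => sum3 (fun nu => eI mu a p * eI nu b p * tau2 mu nu p)).
Definition tau_0mu (mu : nat) (p : pt) : R :=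
  sum3 (fun nu => tauI nu p * tau2 nu mu p).
Definition tau_mu_a (mu a : nat) (p : pt) : R :=
  sum3 (fun nu => tau2 mu nu p * eI nu a p).

Definition asd (f : nat -> pt -> R) (mu nu : nat) (p : pt) : R :=
  (pder mu (f nu) p - pder nu (f mu) p) / 2.

Definition omegaA (mu a b : nat) (p : pt) : R :=
  sum3 (fun nu => eI nu a p * asd (fun rho => e rho b) mu nu p).
Definition omega (mu a b : nat) (p : pt) : R :=
  (omegaA mu a b p - omegaA mu b a p)
  - sum2 (fun c => e mu c p *
       sum3 (fun nu => sum3 (fun rho =>
         eI nu a p * eI rho b p * asd (fun s => e s c) nu rho p)))
  - tau mu p * sum3 (fun nu => sum3 (fun rho =>
         eI nu a p * eI rho b p * asd m nu rho p)).

Variable zeta : pt -> spinor.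

Definition Dzeta (mu : nat) (p : pt) : spinor :=
  let dz := (pder mu (fun q => fst (zeta q)) p, pder mu (fun q => snd (zeta q)) p) in
  let w := mapp (mscal (1/4) (msum2 (fun a => msum2 (fun b =>
              mscal (omega mu a b p) (gam2 a b))))) (zeta p) in
  (fst dz + fst w, snd dz + snd w).

Definition eq1 (p : pt) : Prop :=
  mapp (mscal (4/3 * v p - sum2 (fun a => sum2 (fun b => eps a b * tau_ab a b p))) gam0)
       (zeta p) = (0, 0).

Definition eq2 (mu : nat) (p : pt) : Prop :=
  mapp (madd (madd (madd (madd
     (mscal (3/2) (msum2 (fun a => mscal (tau_mu_a mu a p) (gam2 a 0))))
     (msum2 (fun a => mscal (e mu a p * v p) (gam a))))
     (msum2 (fun a => mscal (tau mu p * va a p) (gam a))))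
     (mscal (reU p * tau mu p) gam0))
     (mscal (imU p * tau mu p) mid)) (zeta p) = (0, 0).

Definition eq3 (mu : nat) (p : pt) : Prop :=
  Dzeta mu p =
  mapp (madd (madd (madd (madd
     (mscal (1/4 * tau_0mu mu p) mid)
     (mscal (1/2 * vmu mu p) gam0))
     (mscal (-1/6) (msum2 (fun a => msum2 (fun b =>
        mscal (e mu a p * va b p) (mmul (mmul (gam a) (gamUp b)) gam0))))))
     (mscal (-1/6 * reU p) (msum2 (fun a => mscal (e mu a p) (gam a)))))
     (mscal (1/6 * imU p) (msum2 (fun a => mscal (e mu a p) (gam2 a 0)))))
   (zeta p).

Definition S_minus (p : pt) : Prop :=
  eq1 p /\ (forall mu, (mu < 3)%nat -> eq2 mu p /\ eq3 mu p).
End NC.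

Definition inM (l : R) (p : pt) : Prop :=
  coord 1 p ^ 2 + coord 2 p ^ 2 < l ^ 2.
Definition lam (l : R) (p : pt) : R :=
  ln (2 / (1 - (coord 1 p ^ 2 + coord 2 p ^ 2) / l ^ 2)).
Definition kap (l : R) (p : pt) : R := - lam l p.
Definition bg_tau (l : R) (mu : nat) (p : pt) : R :=
  if Nat.eqb mu 0 then exp (kap l p) else 0.
Definition bg_e (l : R) (mu a : nat) (p : pt) : R :=
  if Nat.eqb mu a then exp (lam l p) else 0.
Definition bg_m (l : R) (phi : pt -> R) (mu : nat) (p : pt) : R :=
  if Nat.eqb mu 0 then phi p * exp (kap l p) else 0.
Definition bg_va (l : R) (a : nat) (p : pt) : R :=
  match a with
  | 1%nat => 3/2 * (coord 2 p / l ^ 2)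
  | 2%nat => 3/2 * (- coord 1 p / l ^ 2)
  | _ => 0 end.

(** exp(pi/8 gamma_0) = cos(pi/8) 1 + sin(pi/8) gamma_0, since gamma_0^2 = -1 *)
Definition exp_pi8_gam0 : mat2 := madd (mscal (cos (PI/8)) mid) (mscal (sin (PI/8)) gam0).

(* Main.v *)
Require Import Defs.
From Stdlib Require Import Reals Lra Psatz.
From Coquelicot Require Import Coquelicot.
Open Scope R_scope.

Lemma qpos l x1 x2 : 0 < l -> x1^2 + x2^2 < l^2 ->
  0 < 1 + - ((x1 * (x1 * 1) + x2 * (x2 * 1)) * / (l * (l * 1))).
Proof. intros hl hM.
replace (1 + - ((x1 * (x1 * 1) + x2 * (x2 * 1)) * / (l * (l * 1)))) with
 ((l^2 - x1^2-x2^2)/ l^2) by (field; lra).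
apply Rdiv_lt_0_compat; nra. Qed.

Ltac fin hl hM x1 x2 :=
  let h := fresh in pose proof (qpos _ x1 x2 hl hM) as h;
  first [ split; [lra| split; [apply Rdiv_lt_0_compat; lra | trivial]]
        | repeat split; lra
        | rewrite ?exp_Ropp, ?exp_ln by (apply Rdiv_lt_0_compat; lra);
          field; repeat split; nra ].

Lemma pder_const mu c p : pder mu (fun _ => c) p = 0.
Proof. unfold pder. apply Derive_const. Qed.

Section L.
Variables (l t x1 x2 : R) (hl : 0 < l) (hM : x1^2 + x2^2 < l^2).

Lemma explam : exp (lam l (t,x1,x2)) = 2*l^2/(l^2-x1^2-x2^2).
Proof. unfold lam, coord; simpl. rewrite exp_ln.
 - field. repeat split; nra.
 - apply Rdiv_lt_0_compat; try lra. apply (Rmult_lt_reg_r (l^2)); try nra.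
   field_simplify; nra. Qed.
Lemma expkap : exp (kap l (t,x1,x2)) = (l^2-x1^2-x2^2)/(2*l^2).
Proof. unfold kap. rewrite exp_Ropp, explam. field. repeat split; nra. Qed.

Lemma dl0 : pder 0 (fun q => exp (lam l q)) (t,x1,x2) = 0.
Proof. unfold pder, lam, coord. simpl. apply Derive_const. Qed.
Lemma dl1 : pder 1 (fun q => exp (lam l q)) (t,x1,x2) = 4*l^2*x1/(l^2-x1^2-x2^2)^2.
Proof. unfold pder, lam, coord. simpl. apply is_derive_unique. auto_derive.
all: replace (x1+0) with x1 by ring. all: fin hl hM x1 x2. Qed.
Lemma dl2 : pder 2 (fun q => exp (lam l q)) (t,x1,x2) = 4*l^2*x2/(l^2-x1^2-x2^2)^2.
Proof. unfold pder, lam, coord. simpl. apply is_derive_unique. auto_derive.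
all: replace (x2+0) with x2 by ring. all: fin hl hM x1 x2. Qed.
Lemma dk0 : pder 0 (fun q => exp (kap l q)) (t,x1,x2) = 0.
Proof. unfold pder, kap, lam, coord. simpl. apply Derive_const. Qed.
Lemma dk1 : pder 1 (fun q => exp (kap l q)) (t,x1,x2) = -x1/l^2.
Proof. unfold pder, kap, lam, coord. simpl. apply is_derive_unique. auto_derive.
all: replace (x1+0) with x1 by ring. all: fin hl hM x1 x2. Qed.
Lemma dk2 : pder 2 (fun q => exp (kap l q)) (t,x1,x2) = -x2/l^2.
Proof. unfold pder, kap, lam, coord. simpl. apply is_derive_unique. auto_derive.
all: replace (x2+0) with x2 by ring. all: fin hl hM x1 x2. Qed.
End L.

Arguments pder : simpl never.
Arguments lam : simpl never.
Arguments kap : simpl never.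

Lemma inv_vals l (tauI : nat -> pt -> R) (eI : nat -> nat -> pt -> R) t x1 x2 : 0 < l -> x1^2+x2^2 < l^2 ->
  is_proj_inverse (bg_tau l) (bg_e l) tauI eI (t,x1,x2) ->
  tauI 0%nat (t,x1,x2) = 2*l^2/(l^2-x1^2-x2^2) /\ tauI 1%nat (t,x1,x2) = 0 /\ tauI 2%nat (t,x1,x2) = 0 /\
  eI 0%nat 1%nat (t,x1,x2) = 0 /\ eI 0%nat 2%nat (t,x1,x2) = 0 /\
  eI 1%nat 1%nat (t,x1,x2) = (l^2-x1^2-x2^2)/(2*l^2) /\ eI 2%nat 1%nat (t,x1,x2) = 0 /\
  eI 1%nat 2%nat (t,x1,x2) = 0 /\ eI 2%nat 2%nat (t,x1,x2) = (l^2-x1^2-x2^2)/(2*l^2).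
Proof.
intros hl hM [h1 [h2 [h3 h4]]].
pose proof (h2 1%nat ltac:(lia)) as h21. pose proof (h2 2%nat ltac:(lia)) as h22.
pose proof (h3 1%nat ltac:(lia)) as h31. pose proof (h3 2%nat ltac:(lia)) as h32.
pose proof (h4 1%nat 1%nat ltac:(lia) ltac:(lia)) as h411.
pose proof (h4 1%nat 2%nat ltac:(lia) ltac:(lia)) as h412.
pose proof (h4 2%nat 1%nat ltac:(lia) ltac:(lia)) as h421.
pose proof (h4 2%nat 2%nat ltac:(lia) ltac:(lia)) as h422.
clear h2 h3 h4. unfold sum3, bg_tau, bg_e, kron in h1,h21,h22,h31,h32,h411,h412,h421,h422; simpl in h1,h21,h22,h31,h32,h411,h412,h421,h422.
rewrite (explam l t x1 x2 hl hM) in *. rewrite (expkap l t x1 x2 hl hM) in *.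
assert (hD : 0 < l^2 - x1^2 - x2^2) by lra.
assert (hl2 : 0 < l^2) by nra.
assert (a1 : 0 < 2*l^2/(l^2-x1^2-x2^2)) by (apply Rdiv_lt_0_compat; lra).
assert (a2 : 0 < (l^2-x1^2-x2^2)/(2*l^2)) by (apply Rdiv_lt_0_compat; lra).
set (A := 2*l^2/(l^2-x1^2-x2^2)) in *. set (B := (l^2-x1^2-x2^2)/(2*l^2)) in *.
assert (AB : A * B = 1) by (unfold A, B; field; split; lra).
rewrite !Rmult_0_r, !Rplus_0_l, ?Rplus_0_r in *.
assert (BA : B * A = 1) by (rewrite Rmult_comm; exact AB). assert (Bn : B <> 0) by lra. assert (An : A <> 0) by lra.
repeat split.
- apply (Rmult_eq_reg_r B); [|exact Bn]. rewrite h1; lra.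
- apply (Rmult_eq_reg_r A); [|exact An]. rewrite h21; ring.
- apply (Rmult_eq_reg_r A); [|exact An]. rewrite h22; ring.
- apply (Rmult_eq_reg_r B); [|exact Bn]. rewrite h31; ring.
- apply (Rmult_eq_reg_r B); [|exact Bn]. rewrite h32; ring.
- apply (Rmult_eq_reg_r A); [|exact An]. rewrite h411; lra.
- apply (Rmult_eq_reg_r A); [|exact An]. rewrite h412; ring.
- apply (Rmult_eq_reg_r A); [|exact An]. rewrite h421; ring.
- apply (Rmult_eq_reg_r A); [|exact An]. rewrite h422; lra.
Qed.

Definition vadd (u v : spinor) : spinor := (fst u + fst v, snd u + snd v).
Definition vscal (c : R) (u : spinor) : spinor := (c * fst u, c * snd u).
Lemma mapp_madd A B z : mapp (madd A B) z = vadd (mapp A z) (mapp B z).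
Proof. destruct A, B, z; unfold mapp, madd, vadd; simpl; f_equal; ring. Qed.
Lemma mapp_mscal c A z : mapp (mscal c A) z = vscal c (mapp A z).
Proof. destruct A, z; unfold mapp, mscal, vscal; simpl; f_equal; ring. Qed.

Lemma main_const l phi (tauI : nat -> pt -> R) (eI : nat -> nat -> pt -> R) (z : spinor) t x1 x2 :
  0 < l -> x1^2+x2^2 < l^2 ->
  is_proj_inverse (bg_tau l) (bg_e l) tauI eI (t,x1,x2) ->
  S_minus (bg_tau l) (bg_e l) (bg_m l phi) tauI eI
    (fun _ => 0) (fun _ => 0) (fun _ => 0) (fun _ => 0) (bg_va l) (fun _ => z) (t,x1,x2).
Proof.
intros hl hM hinv.
destruct (inv_vals l tauI eI t x1 x2 hl hM hinv) as (i1&i2&i3&i4&i5&i6&i7&i8&i9).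
destruct z as [za zb].
unfold S_minus. split; [|intros mu hmu; destruct mu as [|[|[|mu]]]; [split..|lia]].
all: unfold eq1, eq2, eq3, Dzeta, vmu, tau_ab, tau_0mu, tau_mu_a, tau2, omega, omegaA, asd.
all: unfold sum3, sum2, msum2, msum3.
all: unfold bg_tau, bg_e, bg_m, bg_va.
all: cbn -[pder lam kap exp Rmult Rplus Rminus Rdiv Ropp Rinv IZR pow PI cos sin mapp madd mscal mmul mid].
all: rewrite ?pder_const, ?i1, ?i2, ?i3, ?i4, ?i5, ?i6, ?i7, ?i8, ?i9.
all: rewrite ?(dl0 l t x1 x2), ?(dl1 l t x1 x2 hl hM), ?(dl2 l t x1 x2 hl hM), ?(dk0 l t x1 x2), ?(dk1 l t x1 x2 hl hM), ?(dk2 l t x1 x2 hl hM).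
all: rewrite ?(explam l t x1 x2 hl hM), ?(expkap l t x1 x2 hl hM).
all: rewrite ?mapp_madd, ?mapp_mscal.
all: unfold gam2, mid, gam0.
all: rewrite ?mapp_madd, ?mapp_mscal.
all: cbn [mapp mmul m11 m12 m21 m22 gam fst snd].
all: unfold vadd, vscal; cbn [fst snd].
all: unfold mapp, mmul, madd, mscal; cbn [fst snd m11 m12 m21 m22].
all: assert (hD : l^2 - x1^2 - x2^2 <> 0) by lra.
all: assert (hl0 : l <> 0) by lra.
all: f_equal; field; auto.
Qed.

Theorem mainTheorem5 (l : R) (hl : 0 < l) (phi : pt -> R)
  (hphi : smooth_on (inM l) phi)
  (tauI : nat -> pt -> R) (eI : nat -> nat -> pt -> R)
  (hinv : forall p, inM l p ->
     is_proj_inverse (bg_tau l) (bg_e l) tauI eI p) :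
  (forall zeta0 : spinor, zeta0 <> (0, 0) ->
     let zeta := fun _ : pt => mapp exp_pi8_gam0 zeta0 in
     forall p, inM l p ->
       S_minus (bg_tau l) (bg_e l) (bg_m l phi) tauI eI
         (fun _ => 0) (fun _ => 0) (fun _ => 0) (fun _ => 0) (bg_va l) zeta p
       /\ zeta p <> (0, 0))
  /\
  (exists zeta1 zeta2 : pt -> spinor,
     (forall p, inM l p ->
        S_minus (bg_tau l) (bg_e l) (bg_m l phi) tauI eI
          (fun _ => 0) (fun _ => 0) (fun _ => 0) (fun _ => 0) (bg_va l) zeta1 p
        /\ S_minus (bg_tau l) (bg_e l) (bg_m l phi) tauI eI
          (fun _ => 0) (fun _ => 0) (fun _ => 0) (fun _ => 0) (bg_va l) zeta2 p
        /\ zeta1 p <> (0, 0) /\ zeta2 p <> (0, 0)) /\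
     (forall c1 c2 : R,
        (forall p, inM l p ->
           (c1 * fst (zeta1 p) + c2 * fst (zeta2 p),
            c1 * snd (zeta1 p) + c2 * snd (zeta2 p)) = (0, 0)) ->
        c1 = 0 /\ c2 = 0)).
Proof.
split.
- intros z0 hz zeta p hp. destruct p as [[t x1] x2]. split.
  + apply main_const; [exact hl | exact hp | apply hinv; exact hp].
  + unfold zeta. destruct z0 as [a b].
    unfold mapp, exp_pi8_gam0, madd, mscal, mid, gam0, gam; cbn [fst snd m11 m12 m21 m22].
    intro H. injection H as H1 H2. apply hz.
    pose proof (sin2_cos2 (PI/8)) as hsc. unfold Rsqr in hsc.
    assert (ha : a = 0) by nra. assert (hb : b = 0) by nra. subst; reflexivity.
- exists (fun _ => (1,0)), (fun _ => (0,1)). split.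
  + intros p hp. destruct p as [[t x1] x2].
    split; [|split; [|split]].
    * apply main_const; [exact hl | exact hp | apply hinv; exact hp].
    * apply main_const; [exact hl | exact hp | apply hinv; exact hp].
    * intro H; injection H; lra.
    * intro H; injection H; lra.
  + intros c1 c2 H.
    assert (h0 : inM l (0,0,0)) by (unfold inM, coord; simpl; nra).
    specialize (H _ h0). cbn [fst snd] in H. injection H as H1 H2. lra.
Qed.
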